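(* Let $X,Y,Z$ be complex Banach spaces, $\emptyset\ne I\subseteq\mathbb R^n$, let $\mathbb D\subseteq I$ be unbounded, let $\mathcal B$ be a non-empty collection of non-empty subsets of $X$ such that every $x\in X$ belongs to some $B\in\mathcal B$, and let $\mathrm R$ be a non-empty collection of sequences in $\mathbb R^n$ with $\mathbf t+\mathbf b(l)\in I$ whenever $\mathbf t\in I$, $\mathbf b\in\mathrm R$, $l\in\mathbb N$. Suppose $F_0:I\times X\to Y$ is $(\mathrm R,\mathcal B)$-multi-almost periodic, $Q_0\in C_{0,\mathbb D,\mathcal B}(I\times X:Y)$ and $F=F_0+Q_0$ on $I\times X$. Suppose $G_1:I\times Y\to Z$ is $(\mathrm R',\mathcal B')$-multi-almost periodic, where $\mathrm R'$ consists of all sequences from $\mathrm R$ and all their subsequences and $\mathcal B':=\{\bigcup_{\mathbf t\in I}F_0(\mathbf t;B):B\in\mathcal B\}$; $Q_1\in C_{0,\mathbb D,\mathcal B_1}(I\times Y:Z)$ with $\mathcal B_1:=\{\bigcup_{\mathbf t\in I}F(\mathbf t;B):B\in\mathcal B\}$; and $G=G_1+Q_1$ on $I\times Y$. If there exists $L>0$ with $\|G_1(\mathbf t;x)-G_1(\mathbf t;y)\|_Z\le L\|x-y\|_Y$ for all $\mathbf t\in I$, $x,y\in Y$, then $W(\mathbf t;x):=G(\mathbf t;F(\mathbf t;x))$ is $\mathbb D$-asymptotically $(\mathrm R,\mathcal B)$-multi-almost periodic.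
   Context: For Banach spaces $U,V$ and a collection $\mathcal C$ of subsets of $U$: $C_{0,\mathbb D,\mathcal C}(I\times U:V)$ is the space of continuous $Q:I\times U\to V$ such that for every $C\in\mathcal C$, $\lim_{\mathbf t\in\mathbb D,|\mathbf t|\to\infty}Q(\mathbf t;u)=0$ uniformly for $u\in C$. A continuous $H:I\times U\to V$ is $(\mathrm S,\mathcal C)$-multi-almost periodic (for a collection $\mathrm S$ of sequences in $\mathbb R^n$ with $\mathbf t+\mathbf b(l)\in I$ for $\mathbf t\in I$, $\mathbf b\in\mathrm S$) if for every $C\in\mathcal C$ and $(\mathbf b_k)\in\mathrm S$ there exist a subsequence $(\mathbf b_{k_l})$ and $H^\ast$ with $H(\mathbf t+\mathbf b_{k_l};u)\to H^\ast(\mathbf t;u)$ uniformly for $u\in C$, $\mathbf t\in I$. $W:I\times X\to Z$ is $\mathbb D$-asymptotically $(\mathrm R,\mathcal B)$-multi-almost periodic if $W=G'+Q'$ with $G'$ $(\mathrm R,\mathcal B)$-multi-almost periodic and $Q'\in C_{0,\mathbb D,\mathcal B}(I\times X:Z)$. *)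

(* Defs.v *)
(* Complex Banach spaces = completeNormedModType over
   the complex numbers R[i] (R : realType), time domain R^n = 'rV[R]_n. *)
From HB Require Import structures.
From mathcomp Require Import all_boot all_order all_algebra.
From mathcomp Require Import all_classical all_reals all_analysis.
From mathcomp Require Export complex.
Export Order.TTheory GRing.Theory Num.Theory.
Export numFieldNormedType.Exports.
Set Implicit Arguments.
Unset Strict Implicit.
Unset Printing Implicit Defensive.
Local Open Scope ring_scope.
Local Open Scope complex_scope.
Local Open Scope classical_set_scope.

Section Defs.
Variables (R : realType) (n : nat).

Definition cont_on (U V : normedModType R[i]) (I : set 'rV[R]_n)
  (Q : 'rV[R]_n -> U -> V) : Prop :=
  {within I `*` [set: U], continuous (fun p : 'rV[R]_n * U => Q p.1 p.2)}.

Definition C0DC (U V : normedModType R[i]) (I D : set 'rV[R]_n)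
  (C : set (set U)) (Q : 'rV[R]_n -> U -> V) : Prop :=
  cont_on I Q /\
  forall Cs, C Cs ->
    forall e : R, 0 < e -> exists M : R, forall t u, D t -> M < `|t| -> Cs u ->
      `|Q t u| < e%:C.

Definition multi_ap (U V : normedModType R[i]) (I : set 'rV[R]_n)
  (S : set (nat -> 'rV[R]_n)) (C : set (set U)) (H : 'rV[R]_n -> U -> V) : Prop :=
  cont_on I H /\
  forall Cs, C Cs -> forall b, S b ->
    exists (k : nat -> nat) (Hs : 'rV[R]_n -> U -> V),
      {homo k : i j / (i < j)%N} /\
      forall e : R, 0 < e -> exists N : nat, forall l, (N <= l)%N ->
        forall t u, I t -> Cs u -> `|H (t + b (k l)) u - Hs t u| < e%:C.

Definition asympt_multi_ap (U V : normedModType R[i]) (I D : set 'rV[R]_n)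
  (S : set (nat -> 'rV[R]_n)) (C : set (set U)) (W : 'rV[R]_n -> U -> V) : Prop :=
  exists (G' Q' : 'rV[R]_n -> U -> V),
    multi_ap I S C G' /\ C0DC I D C Q' /\
    forall t x, I t -> W t x = G' t x + Q' t x.

Definition subseq_closure (S : set (nat -> 'rV[R]_n)) : set (nat -> 'rV[R]_n) :=
  [set b | exists a (phi : nat -> nat), S a /\ {homo phi : i j / (i < j)%N} /\
     b = a \o phi].

Definition image_family (U V : Type) (I : set 'rV[R]_n) (F : 'rV[R]_n -> U -> V)
  (Bs : set (set U)) : set (set V) :=
  [set \bigcup_(t in I) (F t @` B) | B in Bs].
End Defs.

(* Main.v *)
Require Import Defs.
From HB Require Import structures.
From mathcomp Require Import all_boot all_order all_algebra.
From mathcomp Require Import all_classical all_reals all_analysis.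
From mathcomp Require Import complex.
From mathcomp Require Import ring.
Import Order.TTheory GRing.Theory Num.Theory.
Import numFieldNormedType.Exports.
Local Open Scope ring_scope.
Local Open Scope complex_scope.
Local Open Scope classical_set_scope.
Set Implicit Arguments.

Lemma cvg_comp_within (T U V : topologicalType) (A : set T) (B : set U)
  (h : T -> U) (f : U -> V) x :
 (forall y, A y -> B (h y)) -> h @ within A (nbhs x) --> h x ->
 f @ within B (nbhs (h x)) --> f (h x) ->
 (f \o h) @ within A (nbhs x) --> f (h x).
Proof.
move=> AB hc fc W /fc Wn.
have := hc _ Wn.
rewrite /within /= !nbhs_simpl /=.
apply: filterS => z H Az; exact: H Az (AB _ Az).
Qed.

Section Cont.
Variables (R : realType) (n : nat).

Lemma cont_onP (U V : normedModType R[i]) (I : set 'rV[R]_n)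
  (Q : 'rV[R]_n -> U -> V) :
  cont_on I Q <-> forall p, (I `*` setT) p ->
    (fun p => Q p.1 p.2) @ within (I `*` setT) (nbhs p) --> Q p.1 p.2.
Proof. exact: subspace_continuousP. Qed.

Lemma cont_on_comp (U V W : normedModType R[i]) (I : set 'rV[R]_n)
  (A : 'rV[R]_n -> U -> V) (H : 'rV[R]_n -> V -> W) :
  cont_on I A -> cont_on I H -> cont_on I (fun t x => H t (A t x)).
Proof.
move=> /cont_onP cA /cont_onP cH; apply/cont_onP => -[t x] [It _] /=.
pose h := fun p : 'rV[R]_n * U => (p.1, A p.1 p.2).
have -> : (fun p : 'rV[R]_n * U => H p.1 (A p.1 p.2)) =
   (fun q : 'rV[R]_n * V => H q.1 q.2) \o h by [].
apply: (@cvg_comp_within _ _ _ _ (I `*` setT)).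
- by move=> [s y] [Is _]; split.
- rewrite /h /=.
  have c1 : (fun p : 'rV[R]_n * U => p.1) @ within (I `*` setT) (nbhs (t, x)) --> t.
    apply: (@cvg_within_filter _ _ _ (nbhs (t, x))); exact: (@cvg_fst _ _ (nbhs t) (nbhs x) _).
  have c2 := cA (t, x) (conj It Logic.I).
  exact: (cvg_pair c1 c2).
- exact: (cH (t, A t x)).
Qed.

Lemma cont_on_ext (U V : normedModType R[i]) (I : set 'rV[R]_n)
  (A B : 'rV[R]_n -> U -> V) :
  cont_on I A -> (forall t x, I t -> B t x = A t x) -> cont_on I B.
Proof.
move=> /cont_onP cA e; apply/cont_onP => -[t x] [It Tx] /=.
rewrite e //.
apply: cvg_trans (cA (t, x) (conj It Tx)).
apply: fmap_within_eq => -[s y]; rewrite inE => -[Is _] /=.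
by rewrite e.
Qed.

Lemma cont_on_add (U V : normedModType R[i]) (I : set 'rV[R]_n)
  (A B : 'rV[R]_n -> U -> V) :
  cont_on I A -> cont_on I B -> cont_on I (fun t x => A t x + B t x).
Proof.
move=> /cont_onP cA /cont_onP cB; apply/cont_onP => p Ip.
exact: (cvgD (cA p Ip) (cB p Ip)).
Qed.

Lemma cont_on_sub (U V : normedModType R[i]) (I : set 'rV[R]_n)
  (A B : 'rV[R]_n -> U -> V) :
  cont_on I A -> cont_on I B -> cont_on I (fun t x => A t x - B t x).
Proof.
move=> /cont_onP cA /cont_onP cB; apply/cont_onP => p Ip.
exact: (cvgB (cA p Ip) (cB p Ip)).
Qed.

Lemma pos_complex (eps : R[i]) : 0 < eps -> exists e : R, 0 < e /\ eps = e%:C.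
Proof.
case: eps => a b; rewrite ltcE /= => /andP[/eqP-> a0].
by exists a.
Qed.

Lemma homo_ge (k : nat -> nat) : {homo k : i j / (i < j)%N} -> forall l, (l <= k l)%N.
Proof. by move=> hk; elim=> [//|l IH]; exact: leq_ltn_trans IH (hk _ _ (ltnSn l)). Qed.

Lemma ap_comp (X Y Z : completeNormedModType R[i]) (I : set 'rV[R]_n)
  (Bs : set (set X)) (Rs : set (nat -> 'rV[R]_n))
  (F0 : 'rV[R]_n -> X -> Y) (G1 : 'rV[R]_n -> Y -> Z) (L : R) :
  0 < L -> (forall t x y, I t -> `|G1 t x - G1 t y| <= L%:C * `|x - y|) ->
  (forall t b l, I t -> Rs b -> I (t + b l)) ->
  multi_ap I Rs Bs F0 -> multi_ap I (subseq_closure Rs) (image_family I F0 Bs) G1 ->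
  multi_ap I Rs Bs (fun t x => G1 t (F0 t x)).
Proof.
move=> L0 Lip IR [cF0 apF0] [cG1 apG1]; split; first exact: cont_on_comp.
move=> B HB b Rb.
have [k1 [F0s [hk1 cv1]]] := apF0 B HB b Rb.
have Hb' : subseq_closure Rs (b \o k1) by exists b, k1.
have HB' : image_family I F0 Bs (\bigcup_(s in I) (F0 s @` B)) by exists B.
have [k2 [G1s [hk2 cv2]]] := apG1 _ HB' _ Hb'.
pose k := k1 \o k2.
pose a t u l := G1 (t + b (k l)) (F0 (t + b (k l)) u).
have cauchyE : forall e : R, 0 < e -> exists N, forall l l', (N <= l)%N -> (N <= l')%N ->
    forall t u, I t -> B u -> `|a t u l - a t u l'| < e%:C.
  move=> e e0.
  pose e1 := e / (6 * L); pose e2 := e / 3.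
  have e10 : 0 < e1 by rewrite /e1 divr_gt0 // mulr_gt0.
  have e20 : 0 < e2 by rewrite /e2 divr_gt0.
  have [N1 H1] := cv1 e1 e10.
  have [N2 H2] := cv2 e2 e20.
  exists (maxn N1 N2) => l l' Nl Nl' t u It Bu.
  have geq := @homo_ge k2 hk2.
  have Its : I (t + b (k l)) := IR _ _ _ It Rb.
  have Its' : I (t + b (k l')) := IR _ _ _ It Rb.
  set y' := F0 (t + b (k l')) u.
  have By' : (\bigcup_(s in I) (F0 s @` B)) y' by exists (t + b (k l')) => //; exists u.
  have h1 : `|F0 (t + b (k l)) u - F0s t u| < e1%:C.
    apply: H1 => //; apply: leq_trans (geq l).
    exact: leq_trans (leq_maxl _ _) Nl.
  have h1' : `|F0s t u - y'| < e1%:C.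
    rewrite distrC; apply: H1 => //; apply: leq_trans (geq l').
    exact: leq_trans (leq_maxl _ _) Nl'.
  have h2 : `|G1 (t + b (k l)) y' - G1s t y'| < e2%:C.
    apply: (H2 l) => //; exact: leq_trans (leq_maxr _ _) Nl.
  have h2' : `|G1s t y' - G1 (t + b (k l')) y'| < e2%:C.
    rewrite distrC; apply: (H2 l') => //; exact: leq_trans (leq_maxr _ _) Nl'.
  have T1 : `|a t u l - G1 (t + b (k l)) y'| < (L * (e1 + e1))%:C.
    apply: le_lt_trans (Lip _ _ _ Its) _.
    rewrite rmorphM /= ltr_pM2l ?ltcR //.
    apply: le_lt_trans (ler_distD (F0s t u) _ _) _.
    by rewrite rmorphD; apply: ltrD.
  have -> : e%:C = (L * (e1 + e1))%:C + (e2%:C + e2%:C).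
    rewrite -!rmorphD; congr (_%:C); rewrite /e1 /e2; field.
    by rewrite gt_eqF.
  apply: le_lt_trans (ler_distD (G1 (t + b (k l)) y') _ _) _.
  apply: ltrD => //.
  apply: le_lt_trans (ler_distD (G1s t y') _ _) _.
  exact: ltrD.
have cvga : forall t u, I t -> B u -> cvg (a t u @ \oo).
  move=> t u It Bu; apply/cauchy_cvgP; apply/cauchy_exP => eps /pos_complex [e [e0 ->]].
  have [N HN] := cauchyE e e0.
  exists (a t u N); exists N => // l /= Nl.
  rewrite -ball_normE /=.
  exact: HN.
exists k, (fun t u => lim (a t u @ \oo)); split.
  move=> i j ij; exact: hk1 _ _ (hk2 _ _ ij).
move=> e e0.
have [N HN] := cauchyE (e / 2) (divr_gt0 e0 (ltr0Sn _ _)).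
exists N => l Nl t u It Bu.
have := cvga t u It Bu.
move/cvgrPdist_lt => /(_ (e / 2)%:C); rewrite ltcR => /(_ (divr_gt0 e0 (ltr0Sn _ _))) [m _ Hm].
have := Hm (maxn N m) (leq_maxr _ _).
have := HN l (maxn N m) Nl (leq_maxl _ _) t u It Bu.
rewrite -/(a t u l) => A1 A2.
rewrite (splitr e) rmorphD.
apply: le_lt_trans (ler_distD (a t u (maxn N m)) _ _) _.
by apply: ltrD => //; rewrite distrC.
Qed.
End Cont.

Unset Implicit Arguments.

Theorem theorem2p48 (R : realType) (n : nat)
  (X Y Z : completeNormedModType R[i])
  (I D : set 'rV[R]_n) (Bs : set (set X)) (Rs : set (nat -> 'rV[R]_n))
  (F F0 Q0 : 'rV[R]_n -> X -> Y) (G G1 Q1 : 'rV[R]_n -> Y -> Z) :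
  I !=set0 ->
  D `<=` I ->
  (forall M : R, exists t, D t /\ M < `|t|) ->
  Bs !=set0 ->
  (forall B, Bs B -> B !=set0) ->
  (forall x : X, exists B, Bs B /\ B x) ->
  Rs !=set0 ->
  (forall t b l, I t -> Rs b -> I (t + b l)) ->
  multi_ap I Rs Bs F0 ->
  C0DC I D Bs Q0 ->
  (forall t x, I t -> F t x = F0 t x + Q0 t x) ->
  multi_ap I (subseq_closure Rs) (image_family I F0 Bs) G1 ->
  C0DC I D (image_family I F Bs) Q1 ->
  (forall t y, I t -> G t y = G1 t y + Q1 t y) ->
  (exists L : R, 0 < L /\
     forall t (x y : Y), I t -> `|G1 t x - G1 t y| <= L%:C * `|x - y|) ->
  asympt_multi_ap I D Rs Bs (fun t x => G t (F t x)).
Proof.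
move=> _ DI _ _ _ _ _ IR apF0 [cQ0 dQ0] eF apG1 [cQ1 dQ1] eG [L [L0 Lip]].
have cF0 := apF0.1; have cG1 := apG1.1.
have cF : cont_on I F.
  apply: cont_on_ext; last exact: eF.
  exact: cont_on_add cF0 cQ0.
exists (fun t x => G1 t (F0 t x)),
  (fun t x => G1 t (F t x) - G1 t (F0 t x) + Q1 t (F t x)).
split; [exact: ap_comp L0 Lip IR apF0 apG1|split; [split|]].
- apply: cont_on_add; last exact: cont_on_comp cF cQ1.
  by apply: cont_on_sub; apply: cont_on_comp.
- move=> B HB e e0.
  have e20 : 0 < e / 2 by rewrite divr_gt0.
  have [M0 HM0] := dQ0 B HB (e / 2 / L) (divr_gt0 e20 L0).
  have HB1 : image_family I F Bs (\bigcup_(s in I) (F s @` B)) by exists B.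
  have [M1 HM1] := dQ1 _ HB1 (e / 2) e20.
  exists (Num.max M0 M1) => t u Dt Mt Bu.
  have It := DI _ Dt.
  rewrite gt_max in Mt; case/andP: Mt => Mt0 Mt1.
  have -> : e%:C = (e / 2)%:C + (e / 2)%:C by rewrite -rmorphD -splitr.
  apply: le_lt_trans (ler_normD _ _) _.
  apply: ltrD; last first.
    apply: HM1 => //; exists t => //; exists u => //.
  apply: le_lt_trans (Lip _ _ _ It) _.
  rewrite eF // addrAC subrr add0r.
  have -> : (e / 2)%:C = L%:C * (e / 2 / L)%:C.
    rewrite -rmorphM; congr (_%:C); field; by rewrite gt_eqF.
  rewrite ltr_pM2l ?ltcR //.
  exact: HM0.
- move=> t x It /=.
  by rewrite eG // addrA [G1 t (F0 t x) + _]addrC subrK.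
Qed.
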